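(* Let $a_0,\dots,a_N\in\mathbb{Q}$ and $r,d\in\mathbb{N}$ with $r\le N$, let $m=(r+1)(d+1)$, and let $M=(A\odot B_d\,|\,A\odot B_{d-1}\,|\,\cdots\,|\,A\odot B_0)\in\mathbb{Q}^{(N-r+1)\times m}$, with $A$, $B_j$, $\odot$ as in the context. Consider the following procedure (Algorithm 2). (1) Choose a prime $p$ and set $q=p$. (2) Compute a row-reduced basis $V$ of $\ker M \bmod p$ (i.e. of the kernel of the reduction of $M$ modulo $p$ over $\mathbb{F}_p$, the matrix with rows the elements of $V$ being in reduced row echelon form; entries are represented by integers in $\{0,\dots,p-1\}$). (3) If $V=\emptyset$, return ''no recurrence found''. (4) Repeat: choose a new prime $p$ (different from all primes used before) and compute a row-reduced basis $W$ of $\ker M \bmod p$; combine $V$ and $W$ entrywise by Chinese remaindering into a set $V$ of vectors in $\mathbb{Z}^m$ such that the lattice generated by $V\cup\{pq e_1,\dots,pq e_m\}$ equals $\{w\in\mathbb{Z}^m : Mw\equiv 0 \bmod pq\}$, and set $q:=pq$; apply the LLL algorithm to $V\cup\{qe_1,\dots,qe_m\}$ (where $e_i$ is the $i$th unit vector of $\mathbb{Z}^m$) and let $w$ be the first vector of the output; stop repeating as soon as $Mw=0$ and $w\neq 0$ (i.e. the recurrence $\sum_{i,j}c_{i,j}b_j(n)a_{n+i}=0$ with coefficient vector $w$ is valid on the given data). (5) Return the recurrence corresponding to $w$. Assume that every prime used does not divide any denominator of an entry of $M$ and that the rank of $M$ modulo each such prime equals the rank of $M$ over $\mathbb{Q}$.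 Then the procedure terminates, and if it returns a recurrence, the returned coefficient vector $w\in\mathbb{Z}^m$ is a nonzero element of $\ker_{\mathbb{Z}}M$, i.e. the corresponding recurrence of order $r$ and degree $d$ holds for $n=0,\dots,N-r$.
   Context: Fix a $\mathbb{Q}$-basis $b_0,b_1,\dots$ of $\mathbb{Q}[x]$ such that for every $j$, $b_0,\dots,b_j$ span the polynomials of degree at most $j$. For given $a_0,\dots,a_N\in\mathbb{Q}$ and $r\le N$, $A\in\mathbb{Q}^{(N-r+1)\times(r+1)}$ is the matrix with entry $a_{i+s}$ in row $i$ and column $s$ ($0\le i\le N-r$, $0\le s\le r$), and $B_j\in\mathbb{Q}^{(N-r+1)\times(r+1)}$ is the matrix whose row $i$ has all entries equal to $b_j(i)$. $M_1\odot M_2$ denotes the entrywise product. A vector $c\in\mathbb{Q}^{(r+1)(d+1)}$, split into blocks of length $r+1$ for $j=d,d-1,\dots,0$ with entries $c_{0,j},\dots,c_{r,j}$, corresponds to the recurrence $\sum_{i=0}^r\sum_{j=0}^d c_{i,j}b_j(n)a_{n+i}=0$; it holds on the data iff $Mc=0$. For a rational matrix $M$ with $m$ columns, $\ker_{\mathbb{Z}}M=\{x\in\mathbb{Z}^m: Mx=0\}$. LLL is the Lenstra–Lenstra–Lovász lattice reduction algorithm; it returns a basis of the input lattice whose first vector has Euclidean length at most $2^{m}$ times the length of a shortest nonzero vector of the lattice. *)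

(* Defs.v *)
From HB Require Import structures.
From mathcomp Require Import all_boot all_order all_algebra.
Set Implicit Arguments. Unset Strict Implicit. Unset Printing Implicit Defensive.
Import Order.TTheory GRing.Theory Num.Theory.
Local Open Scope ring_scope.

Definition graded_basis (b : nat -> {poly rat}) : Prop :=
  forall j : nat,
    (forall i : nat, (i <= j)%N -> (size (b i) <= j.+1)%N) /\
    (forall p : {poly rat}, (size p <= j.+1)%N ->
       exists c : 'I_j.+1 -> rat, p = \sum_(i < j.+1) c i *: b i).

Definition Amat (a : nat -> rat) (N r : nat) : 'M[rat]_((N - r).+1, r.+1) :=
  \matrix_(i, s) a (i + s)%N.

Definition Bmat (b : nat -> {poly rat}) (N r j : nat) : 'M[rat]_((N - r).+1, r.+1) :=
  \matrix_(i, s) (b j).[(i : nat)%:R].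

Definition hadamard (R : pzRingType) (k l : nat) (M1 M2 : 'M[R]_(k, l)) : 'M[R]_(k, l) :=
  \matrix_(i, j) (M1 i j * M2 i j).

(* M = (A .* B_d | A .* B_(d-1) | ... | A .* B_0): column k lies in block
   t = k / (r+1) (block t corresponds to j = d - t), at position s = k mod (r+1). *)
Definition recM (a : nat -> rat) (b : nat -> {poly rat}) (N r d : nat)
  : 'M[rat]_((N - r).+1, r.+1 * d.+1) :=
  \matrix_(i, k) hadamard (Amat a N r) (Bmat b N r (d - k %/ r.+1)%N)
                          i (inord (k %% r.+1)).

Definition ratv (m : nat) (w : 'cV[int]_m) : 'cV[rat]_m := map_mx (fun z : int => z%:~R) w.

Definition kerZ (n m : nat) (M : 'M[rat]_(n, m)) (w : 'cV[int]_m) : Prop :=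
  M *m ratv w = 0.

(* reduction of a rational number modulo p (meaningful when p does not divide
   the denominator) *)
Definition redp (p : nat) (x : rat) : 'F_p := (numq x)%:~R / (denq x)%:~R.

Definition redM (p n m : nat) (M : 'M[rat]_(n, m)) : 'M['F_p]_(n, m) := map_mx (@redp p) M.

Definition good_prime (p n m : nat) (M : 'M[rat]_(n, m)) : Prop :=
  prime p /\
  (forall i j, ~ (p%:Z %| denq (M i j))%Z) /\
  \rank (redM p M) = \rank M.

(* ker M mod p is the zero space (i.e. its row-reduced basis V is empty) *)
Definition kernel_mod_trivial (p n m : nat) (M : 'M[rat]_(n, m)) : Prop :=
  forall v : 'cV['F_p]_m, redM p M *m v = 0 -> v = 0.

(* {w in Z^m : M w = 0 mod q} (denominators assumed coprime to q) *)
Definition lattice_mod (q n m : nat) (M : 'M[rat]_(n, m)) (w : 'cV[int]_m) : Prop :=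
  forall i, (q%:Z %| numq ((M *m ratv w) i ord0))%Z.

Definition in_lattice (m : nat) (gens : seq 'cV[int]_m) (v : 'cV[int]_m) : Prop :=
  exists cs : seq int, size cs = size gens /\
    v = \sum_(i < size gens) cs`_i *: gens`_i.

Definition Zindep (m : nat) (B : seq 'cV[int]_m) : Prop :=
  forall cs : seq int, size cs = size B ->
    \sum_(i < size B) cs`_i *: B`_i = 0 -> forall i, (i < size B)%N -> cs`_i = 0.

Definition norm2 (m : nat) (v : 'cV[int]_m) : int := \sum_(i < m) (v i ord0) ^+ 2.

(* w is the first vector of a possible LLL output on input gens: the output is a
   basis of the lattice generated by gens, and its first vector has length at most
   2^m times that of a shortest nonzero lattice vector (squared: 4^m). *)
Definition LLL_first (m : nat) (gens : seq 'cV[int]_m) (w : 'cV[int]_m) : Prop :=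
  exists B : seq 'cV[int]_m,
    [/\ (forall v, in_lattice B v <-> in_lattice gens v), Zindep B,
        ohead B = Some w &
        forall v, in_lattice gens v -> v != 0 -> norm2 w <= (4 ^ m)%:Z * norm2 v].

Definition qunits (m q : nat) : seq 'cV[int]_m :=
  [seq (q%:Z *: delta_mx i ord0) | i <- enum 'I_m].

Definition qprod (ps : nat -> nat) (k : nat) : nat := \prod_(i < k.+1) ps i.

(* A run of Algorithm 2.  ps 0 is the prime of step (1); ps k (k >= 1) is the new
   prime of the k-th pass through step (4); Vs k is the CRT-combined set after that
   pass (q = qprod ps k); ws k is the first vector of the LLL output in that pass. *)
Definition alg2_run (m n : nat) (M : 'M[rat]_(n, m)) (ps : nat -> nat)
  (Vs : nat -> seq 'cV[int]_m) (ws : nat -> 'cV[int]_m) : Prop :=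
  forall k, (1 <= k)%N ->
    (forall v, in_lattice (Vs k ++ qunits m (qprod ps k)) v <->
               lattice_mod (qprod ps k) M v) /\
    LLL_first (Vs k ++ qunits m (qprod ps k)) (ws k).

Definition alg2_stop (m n : nat) (M : 'M[rat]_(n, m)) (w : 'cV[int]_m) : Prop :=
  M *m ratv w = 0 /\ w != 0.

(* the run terminates with result res (None = "no recurrence found",
   Some w = recurrence with coefficient vector w) *)
Definition alg2_returns (m n : nat) (M : 'M[rat]_(n, m)) (ps : nat -> nat)
  (ws : nat -> 'cV[int]_m) (res : option 'cV[int]_m) : Prop :=
  match res with
  | None => kernel_mod_trivial (ps 0) M
  | Some w => ~ kernel_mod_trivial (ps 0) M /\
      exists k, [/\ (1 <= k)%N, alg2_stop M (ws k),
                    (forall k', (1 <= k')%N -> (k' < k)%N -> ~ alg2_stop M (ws k')) &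
                    w = ws k]
  end.

(* Main.v *)
Require Import Defs.
From HB Require Import structures.
From mathcomp Require Import all_boot all_order all_algebra.
From mathcomp Require Import zify ring lra.
From Stdlib Require Import Classical.
Import Order.TTheory GRing.Theory Num.Theory.
Local Open Scope ring_scope.

Lemma le_sq (z : int) : `|z| <= z ^+ 2.
Proof. rewrite -real_normK ?num_real //. have: 0 <= `|z| by []. move: `|z| => t ht. rewrite expr2. nia. Qed.

Lemma denq_abs (x : rat) : (`|denq x|%N)%:Z = denq x.
Proof. by rewrite abszE gtr0_norm ?denq_gt0. Qed.

Lemma scale_rat (x : rat) (D : nat) : (`|denq x| %| D)%N ->
  ((numq x * (D %/ `|denq x|)%N%:Z)%:~R = D%:R * x :> rat).
Proof.
move=> hd. have hD : D = ((D %/ `|denq x|) * `|denq x|)%N by rewrite divnK.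
set e := (D %/ `|denq x|)%N in hD *.
have -> : D%:R = (e%:Z * denq x)%:~R :> rat by rewrite -denq_abs -PoszM -hD.
have hn : (denq x)%:~R != 0 :> rat by rewrite intr_eq0 denq_neq0.
have hx := divq_num_den x. move: hn hx.
set n := numq x; set dn := denq x => hn hx. rewrite -hx.
rewrite !intrM. field. exact: hn.
Qed.


Lemma norm2_ge (m : nat) (w : 'cV[int]_m) j : `|w j ord0| <= norm2 w.
Proof.
apply: (le_trans (le_sq _)). rewrite /norm2 (bigD1 j) //= lerDl.
by apply: sumr_ge0 => i _; rewrite exprn_even_ge0.
Qed.

Lemma norm2_ge0 (m : nat) (w : 'cV[int]_m) : 0 <= norm2 w.
Proof. by apply: sumr_ge0 => i _; rewrite exprn_even_ge0. Qed.

Lemma bound_kill (n m : nat) (M : 'M[rat]_(n, m)) : exists C : int, 0 <= C /\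
  forall (q : nat) w, lattice_mod q M w -> C * norm2 w < q%:Z -> M *m ratv w = 0.
Proof.
pose Dn := (\prod_(ij : 'I_n * 'I_m) `|denq (M ij.1 ij.2)|)%N.
have hdv i j : (`|denq (M i j)| %| Dn)%N.
  by rewrite /Dn (bigD1 (i, j)) //= dvdn_mulr.
have hDn : (0 < Dn)%N.
  by rewrite /Dn prodn_gt0 // => ij; rewrite absz_gt0 denq_neq0.
pose Z i j := numq (M i j) * (Dn %/ `|denq (M i j)|)%N%:Z.
have hZ i j : (Z i j)%:~R = Dn%:R * M i j by apply: scale_rat.
exists (\sum_i \sum_j `|Z i j|); split.
  by apply: sumr_ge0 => i _; apply: sumr_ge0.
move=> q w hq hC; apply/matrixP => i j0; rewrite (ord1 j0) [RHS]mxE.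
pose z := \sum_j Z i j * w j ord0.
have hxz : Dn%:R * (M *m ratv w) i ord0 = z%:~R.
  rewrite !mxE mulr_sumr rmorph_sum; apply: eq_bigr => j _.
  by rewrite !mxE rmorphM /= hZ mulrA.
have hqn := hq i. move: hxz hqn.
set x := (M *m ratv w) i ord0 => hxz hqn.
have hx := divq_num_den x. move: hx hxz hqn.
set nn := numq x; set dd := denq x => hx hxz hqn.
have hd0 : dd%:~R != 0 :> rat by rewrite intr_eq0 denq_neq0.
have hE : nn * Dn%:Z = z * dd.
  apply: (@intr_inj rat). rewrite !intrM -hxz -hx. 
  have -> : (Dn%:Z)%:~R = Dn%:R :> rat by [].
  field. exact: hd0.
have hEn : (`|nn| * Dn = `|z| * `|dd|)%N by have := congr1 absz hE; rewrite !abszM.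
have hcop : coprime `|dd| `|nn| by rewrite coprime_sym coprime_num_den.
have : (`|dd| %| `|nn| * Dn)%N by rewrite hEn dvdn_mull.
rewrite Gauss_dvdr // => hdD.
have hDe : Dn = (Dn %/ `|dd| * `|dd|)%N by rewrite divnK.
have hdpos : (0 < `|dd|)%N by rewrite absz_gt0 denq_neq0.
have hnz : (`|nn| * (Dn %/ `|dd|) = `|z|)%N.
  apply/eqP; rewrite -(eqn_pmul2r hdpos) -hEn [in X in _ == X]hDe mulnA //.
have hepos : (0 < Dn %/ `|dd|)%N.
  by rewrite divn_gt0 // dvdn_leq.
have hnle : (`|nn| <= `|z|)%N by rewrite -hnz leq_pmulr.
have hzC : `|z| <= (\sum_i \sum_j `|Z i j|) * norm2 w.
  apply: (le_trans (ler_norm_sum _ _ _)).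
  apply: (@le_trans _ _ ((\sum_j `|Z i j|) * norm2 w)).
    rewrite mulr_suml; apply: ler_sum => j _.
    by rewrite normrM ler_wpM2l // norm2_ge.
  apply: ler_wpM2r; first exact: norm2_ge0.
  rewrite (bigD1 i) //= lerDl.
  by apply: sumr_ge0 => k _; apply: sumr_ge0.
have hzq : (`|z| < q)%N.
  have : `|z| < q%:Z by apply: le_lt_trans hzC hC.
  by rewrite -abszE ltz_nat.
case: (posnP `|nn|) => [h0|hpos].
  apply/eqP; rewrite -numq_eq0 -/nn. apply/eqP. by apply/eqP; rewrite -absz_eq0 h0.
have : (q %| `|nn|)%N by move: hqn.
move/dvdn_leq => /(_ hpos) hle.
have := leq_ltn_trans (leq_trans hle hnle) hzq. by rewrite ltnn.
Qed.


Lemma ker_exists (n m p : nat) (M : 'M[rat]_(n, m)) : good_prime p M ->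
  ~ kernel_mod_trivial p M -> exists v0 : 'cV[int]_m, v0 != 0 /\ M *m ratv v0 = 0.
Proof.
move=> [hp [hden hrk]] hnt.
have [v [hv hv0]] : exists v : 'cV['F_p]_m, redM p M *m v = 0 /\ v != 0.
  apply: NNPP => hc; apply: hnt => v hv; apply: NNPP => hv0; apply: hc.
  by exists v; split => //; apply/eqP.
have h1 : (v^T <= kermx (redM p M)^T)%MS.
  by apply/sub_kermxP; rewrite -trmx_mul hv trmx0.
have h2 := mxrankS h1. rewrite mxrank_ker (mxrank_tr (redM p M)) hrk in h2.
have h3 : (0 < \rank v^T)%N by rewrite lt0n mxrank_eq0 trmx_eq0.
have hlt : (0 < m - \rank M)%N by apply: leq_trans h3 h2.
have hK : kermx M^T != 0 by rewrite -mxrank_eq0 mxrank_ker mxrank_tr -lt0n.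
have [i hi] : exists i, row i (kermx M^T) != 0.
  apply: NNPP => hc; move/eqP: hK; apply; apply/row_matrixP => i.
  rewrite row0; apply: NNPP => h; apply: hc; exists i; exact/eqP.
set u := row i (kermx M^T) in hi.
have hu : M *m u^T = 0.
  by rewrite -[M]trmxK -trmx_mul /u -row_mul mulmx_ker row0 trmx0.
clearbody u.
pose Dn := (\prod_(j < m) `|denq (u ord0 j)|)%N.
have hdv j : (`|denq (u ord0 j)| %| Dn)%N by rewrite /Dn (bigD1 j) //= dvdn_mulr.
have hDn : (0 < Dn)%N.
  by rewrite /Dn prodn_gt0 // => j; rewrite absz_gt0 denq_neq0.
pose v0 : 'cV[int]_m := \col_j (numq (u ord0 j) * (Dn %/ `|denq (u ord0 j)|)%N%:Z).
have hr : ratv v0 = Dn%:R *: u^T.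
  by apply/matrixP => j k; rewrite (ord1 k) !mxE scale_rat.
exists v0; split.
  apply/eqP => h0; move: hr; rewrite h0 => /esym/eqP.
  have -> : ratv (0 : 'cV[int]_m) = 0 by apply/matrixP => j k; rewrite !mxE.
  rewrite scaler_eq0 pnatr_eq0 trmx_eq0 (negbTE hi) orbF => /eqP h.
  by move: hDn; rewrite h.
by rewrite hr -scalemxAr hu scaler0.
Qed.

Lemma sum_e1 (m : nat) (w : 'cV[int]_m) (B : seq 'cV[int]_m) :
  \sum_(i < size (w :: B)) (1 :: nseq (size B) (0:int))`_i *: (w :: B)`_i = w.
Proof.
rewrite big_ord_recl /= scale1r big1 ?addr0 // => i _.
by rewrite nth_nseq if_same scale0r.
Qed.

Lemma lll_props (n m q : nat) (M : 'M[rat]_(n, m)) gens w :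
  (forall v, in_lattice gens v <-> lattice_mod q M v) -> LLL_first gens w ->
  [/\ w != 0, lattice_mod q M w &
      forall v, lattice_mod q M v -> v != 0 -> norm2 w <= (4 ^ m)%:Z * norm2 v].
Proof.
move=> heq [B [hBeq hind hhead hb]].
case: B hBeq hind hhead => [|w' B] //= hBeq hind hhead.
have hw : w' = w by case: hhead.
subst w'.
have hsz : size (1 :: nseq (size B) (0:int)) = size (w :: B) by rewrite /= size_nseq.
split.
- apply/eqP => hw0.
  have := hind _ hsz; rewrite sum_e1 hw0 => /(_ erefl 0%N) /=.
  by move=> /(_ isT) /eqP; rewrite oner_eq0.
- apply/heq/hBeq. exists (1 :: nseq (size B) 0); split => //.
  by rewrite sum_e1.
- by move=> v hv hv0; apply: hb => //; apply/heq.
Qed.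

Lemma qprod_ge (ps : nat -> nat) k : (forall i, prime (ps i)) -> (2 ^ k.+1 <= qprod ps k)%N.
Proof.
move=> hp; rewrite /qprod; elim: k.+1 => [|j IH]; first by rewrite big_ord0.
by rewrite big_ord_recr /= expnSr leq_mul // prime_gt1.
Qed.

Theorem mainTheorem1 (a : nat -> rat) (b : nat -> {poly rat}) (N r d : nat)
  (hb : graded_basis b) (hrN : (r <= N)%N)
  (ps : nat -> nat) (Vs : nat -> seq 'cV[int]_(r.+1 * d.+1))
  (ws : nat -> 'cV[int]_(r.+1 * d.+1))
  (hps_inj : injective ps)
  (hps_good : forall k, good_prime (ps k) (recM a b N r d))
  (hrun : alg2_run (recM a b N r d) ps Vs ws) :
  (exists res, alg2_returns (recM a b N r d) ps ws res) /\
  (forall w, alg2_returns (recM a b N r d) ps ws (Some w) ->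
     w != 0 /\ kerZ (recM a b N r d) w).
Proof.
move: hps_good hrun. set M := recM a b N r d. set m := (r.+1 * d.+1)%N.
move=> hps_good hrun.
have hpr i : prime (ps i) by case: (hps_good i).
split; last first.
  by move=> w [_ [k [_ [h1 h2] _ ->]]]; split.
case: (classic (kernel_mod_trivial (ps 0%N) M)) => hk.
  by exists None.
have [v0 [hv0 hMv0]] := ker_exists _ _ _ _ (hps_good 0%N) hk.
have [C [hC0 hC]] := bound_kill _ _ M.
pose K := C * ((4 ^ m)%:Z * norm2 v0).
pose P k := (1 <= k)%N && ((M *m ratv (ws k) == 0) && (ws k != 0)).
have hex : exists k, P k.
  exists (`|K|%N.+1). set k := (`|K|%N.+1).
  have hk1 : (1 <= k)%N by [].
  have [hw0 hwl hwb] := lll_props _ _ _ _ _ _ (proj1 (hrun k hk1)) (proj2 (hrun k hk1)).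
  have hv0l : lattice_mod (qprod ps k) M v0.
    by move=> i; rewrite hMv0 mxE dvdz0.
  have hnw := hwb v0 hv0l hv0.
  apply/andP; split => //; apply/andP; split => //.
  apply/eqP; apply: (hC (qprod ps k)) => //.
  have h1 : C * norm2 (ws k) <= K by rewrite /K ler_wpM2l.
  have h2 : K <= (`|K|%N)%:Z by rewrite abszE ler_norm.
  have h3 : (`|K|%N < qprod ps k)%N.
    apply: (leq_trans _ (qprod_ge _ k hpr)).
    apply: (leq_trans (ltn_expl _ (ltnSn 1))).
    by rewrite leq_exp2l // /k; lia.
  apply: (le_lt_trans h1); apply: (le_lt_trans h2); by rewrite ltz_nat.
case: (ex_minnP hex) => k /andP [hk1 /andP [/eqP hMw hw0]] hmin.
exists (Some (ws k)); split => //; exists k; split => //.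
move=> k' h1 h2 [hs1 hs2].
have := hmin k'; rewrite /P h1 hs2 hs1 eqxx /= => /(_ isT).
by rewrite leqNgt h2.
Qed.
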